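(* In the setting of the context, there is a constant $c(\beta)$ such that the following holds: for all configurations $\sigma,\sigma'\in\Omega$ (depending on $n$) with $\bm S(\sigma)=\bm S(\sigma')$, there is a coupling $(\sigma_t,\sigma'_t)_{t\ge0}$ of two Glauber dynamics started at $\sigma$ and $\sigma'$ such that, with $\tau:=\min\{t\ge0:\sigma_t=\sigma'_t\}$, \[ \limsup_{n\to\infty}\mathbb P_{\sigma,\sigma'}\big(\tau>c(\beta)\,n\log n\big)=0. \]
   Context: Fix $m\ge1$, proportions $p_1,\dots,p_m>0$ with $\sum_ip_i=1$, a symmetric matrix $\mathbf K=(k_{ij})$ with all $k_{ij}>0$, and any inverse temperature $\beta\ge0$; $n$ ranges over positive integers with $np_i\in\mathbb N$. The vertex set $V=\{1,\dots,n\}$ is partitioned into blocks $G_1,\dots,G_m$ with $|G_i|=np_i$; for $v\in G_i,w\in G_j$ put $K(v,w)=k_{ij}/n$. The Glauber dynamics on $\Omega=\{-1,+1\}^V$ picks at each step a uniform random vertex $v$ and sets its spin to $\pm1$ with probability $\frac{1\pm\tanh(\beta S^v)}2$, $S^v=\sum_{w\ne v}K(v,w)\sigma(w)$. For $\sigma\in\Omega$, $\bm S(\sigma)=(S^{(1)}(\sigma),\dots,S^{(m)}(\sigma))$ with $S^{(i)}(\sigma)=\frac1n\sum_{v\in G_i}\sigma(v)$. *)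

(* Defs.v *)
From mathcomp Require Import all_boot all_order all_algebra.
From mathcomp Require Import all_classical all_reals all_analysis.
Set Implicit Arguments. Unset Strict Implicit. Unset Printing Implicit Defensive.
Import Order.TTheory GRing.Theory Num.Theory.
Local Open Scope ring_scope.

Section Glauber.
Variable R : realType.

Definition tanhR (x : R) : R := (expR x - expR (- x)) / (expR x + expR (- x)).

(* configurations on V = {0,...,n-1}; true encodes spin +1, false spin -1 *)
Definition Omega (n : nat) := {ffun 'I_n -> bool}.
Definition spin n (s : Omega n) (v : 'I_n) : R := if s v then 1 else -1.

Definition admissible m (p : 'I_m -> R) (n : nat) : Prop :=
  (0 < n)%N /\ forall i, exists k : nat, n%:R * p i = k%:R.

(* blk : V -> {1..m} assigns each vertex its block; |G_i| = n p_i *)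
Definition block_sizes_ok m (p : 'I_m -> R) n (blk : 'I_n -> 'I_m) : Prop :=
  forall i, #|[set v | blk v == i]|%:R = n%:R * p i.

Definition Kint m (k : 'I_m -> 'I_m -> R) n (blk : 'I_n -> 'I_m) (v w : 'I_n) : R :=
  k (blk v) (blk w) / n%:R.

Definition local_field m k n (blk : 'I_n -> 'I_m) (s : Omega n) (v : 'I_n) : R :=
  \sum_(w | w != v) Kint k blk v w * spin s w.

Definition magnetization m n (blk : 'I_n -> 'I_m) (s : Omega n) (i : 'I_m) : R :=
  (\sum_(v | blk v == i) spin s v) / n%:R.

(* one-step transition probability of the Glauber dynamics:
   choose v uniformly, set sigma(v) = +-1 w.p. (1 +- tanh(beta S^v))/2 *)
Definition glauber_P m k (beta : R) n (blk : 'I_n -> 'I_m) (s s' : Omega n) : R :=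
  \sum_(v : 'I_n)
     (if [forall w, (w != v) ==> (s' w == s w)] then
        n%:R^-1 * ((1 + (if s' v then 1 else -1) * tanhR (beta * local_field k blk s v)) / 2)
      else 0).

Definition traj n (T : nat) := {ffun 'I_T.+1 -> Omega n}.

Definition path_law m k (beta : R) n (blk : 'I_n -> 'I_m) (s0 : Omega n) T (a : traj n T) : R :=
  (if a ord0 == s0 then 1 else 0) *
  \prod_(t < T) glauber_P k beta blk (a (widen_ord (leqnSn T) t)) (a (lift ord0 t)).

Definition is_coupling m k (beta : R) n (blk : 'I_n -> 'I_m) (s0 s0' : Omega n) T
    (mu : traj n T * traj n T -> R) : Prop :=
  [/\ forall ab, 0 <= mu ab,
      forall a, \sum_(b : traj n T) mu (a, b) = path_law k beta blk s0 a
    & forall b, \sum_(a : traj n T) mu (a, b) = path_law k beta blk s0' b].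

(* P(tau > T) where tau = min{t : sigma_t = sigma'_t} *)
Definition prob_not_met n T (mu : traj n T * traj n T -> R) : R :=
  \sum_(ab : traj n T * traj n T | [forall t, ab.1 t != ab.2 t]) mu ab.

Definition horizon (c : R) (n : nat) : nat := Num.truncn (c * n%:R * ln (n%:R : R)).

End Glauber.

Arguments spin {R n}.
Arguments magnetization {R m n}.

(* Main.v *)
Require Import Defs.
From mathcomp Require Import all_boot all_order all_algebra.
From mathcomp Require Import all_classical all_reals all_analysis.
From mathcomp Require Import ring lra.
From mathcomp Require Import fingroup perm.
Import Order.TTheory GRing.Theory Num.Theory.
Local Open Scope ring_scope.

Set Implicit Arguments. Unset Strict Implicit. Unset Printing Implicit Defensive.

Section Gen.
Variable R : realType.

Definition chainp (Z : Type) (T : nat) (F : Z -> Z -> R) (g : 'I_T.+1 -> Z) : R :=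
  \prod_(t < T) F (g (widen_ord (leqnSn T) t)) (g (lift ord0 t)).
Arguments chainp {Z} T F g.

Lemma chainp_ext (Z : Type) T F (g g' : 'I_T.+1 -> Z) :
  (forall t, g t = g' t) -> chainp T F g = chainp T F g'.
Proof. by move=> H; apply: eq_bigr => t _; rewrite !H. Qed.

Lemma chainp_S (Z : Type) T F (g : 'I_T.+2 -> Z) :
  chainp T.+1 F g = F (g ord0) (g (lift ord0 ord0)) * chainp T F (fun j => g (lift ord0 j)).
Proof.
rewrite /chainp big_ord_recl; congr (F (g _) _ * _).
  by apply: val_inj.
apply: eq_bigr => i _; congr (F (g _) _).
by apply: val_inj.
Qed.

Definition fcons (X : finType) T (x : X) (a : {ffun 'I_T -> X}) : {ffun 'I_T.+1 -> X} :=
  [ffun i => if unlift ord0 i is Some j then a j else x].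

Definition ftail (X : finType) T (a : {ffun 'I_T.+1 -> X}) : {ffun 'I_T -> X} :=
  [ffun j => a (lift ord0 j)].

Lemma fcons0 (X : finType) T x (a : {ffun 'I_T -> X}) : fcons x a ord0 = x.
Proof. by rewrite ffunE unlift_none. Qed.

Lemma fconsS (X : finType) T x (a : {ffun 'I_T -> X}) j : fcons x a (lift ord0 j) = a j.
Proof. by rewrite ffunE liftK. Qed.

Lemma fcons_max (X : finType) T x (a : {ffun 'I_T.+1 -> X}) : fcons x a ord_max = a ord_max.
Proof.
have -> : (ord_max : 'I_T.+2) = lift ord0 ord_max by apply: val_inj.
by rewrite fconsS.
Qed.

Lemma sum_ffunS (X : finType) T (F : {ffun 'I_T.+1 -> X} -> R) :
  \sum_a F a = \sum_x \sum_(a' : {ffun 'I_T -> X}) F (fcons x a').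
Proof.
rewrite pair_big /=.
rewrite (reindex (fun p : X * {ffun 'I_T -> X} => fcons p.1 p.2)) //=.
exists (fun a : {ffun 'I_T.+1 -> X} => (a ord0, ftail a)) => [[x a'] _|a _] /=.
  rewrite fcons0; congr pair; apply/ffunP => j; by rewrite ffunE fconsS.
apply/ffunP => i; rewrite ffunE; case: unliftP => [j ->|->] //.
by rewrite ffunE.
Qed.

Lemma sum_split0 (X : finType) T (F : {ffun 'I_T.+1 -> X} -> R) :
  \sum_a F a = \sum_(x : X) \sum_(a : {ffun 'I_T.+1 -> X} | a ord0 == x) F a.
Proof.
rewrite (exchange_big_dep xpredT) //=; apply: eq_bigr => a _ /=.
by rewrite (big_pred1 (a ord0)) // => x /=; rewrite eq_sym.
Qed.

Lemma sum_ffun0 (X : finType) (c : R) : \sum_(a : {ffun 'I_0 -> X}) c = c.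
Proof. by rewrite sumr_const card_ffun card_ord expn0. Qed.

Lemma sum_fcons_eq (X : finType) T (x0 : X) (G : {ffun 'I_T.+1 -> X} -> R) :
  \sum_(a : {ffun 'I_T.+1 -> X}) (if a ord0 == x0 then 1 else 0) * G a =
  \sum_(a' : {ffun 'I_T -> X}) G (fcons x0 a').
Proof.
rewrite sum_ffunS (bigD1 x0) //= [X in _ + X]big1 ?addr0.
  by apply: eq_bigr => a _; rewrite fcons0 eqxx mul1r.
move=> x /negbTE Hx; apply: big1 => b _; by rewrite fcons0 Hx mul0r.
Qed.

Variables (X Y : finType).

Lemma marg1 (Q : X * Y -> X * Y -> R) (P : X -> X -> R) :
  (forall x y x', \sum_(y' : Y) Q (x, y) (x', y') = P x x') ->
  forall T (a : {ffun 'I_T.+1 -> X}) (y0 : Y),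
  \sum_(b : {ffun 'I_T.+1 -> Y}) (if b ord0 == y0 then 1 else 0) * chainp T Q (fun t => (a t, b t))
  = chainp T P a.
Proof.
move=> HQ; elim=> [|T IH] a y0.
  rewrite sum_fcons_eq -[RHS](sum_ffun0 Y); apply: eq_bigr => b _.
  by rewrite /chainp !big_ord0.
rewrite sum_fcons_eq.
transitivity (\sum_(b' : {ffun 'I_T.+1 -> Y}) Q (a ord0, y0) (a (lift ord0 ord0), b' ord0) *
   chainp T Q (fun t => (ftail a t, b' t))).
  apply: eq_bigr => b _; rewrite chainp_S /= fcons0 fconsS.
  congr (_ * _); apply: chainp_ext => t; by rewrite fconsS ffunE.
rewrite sum_split0.
transitivity (\sum_(y : Y) Q (a ord0, y0) (a (lift ord0 ord0), y) * chainp T P (ftail a)).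
  apply: eq_bigr => y _; rewrite -(IH _ y) mulr_sumr big_mkcond /=.
  apply: eq_bigr => b _; case: eqP => [->|]; by rewrite ?mul1r ?mul0r ?mulr0.
rewrite -mulr_suml HQ chainp_S; congr (_ * _).
by apply: chainp_ext => t; rewrite ffunE.
Qed.


End Gen.
Arguments chainp {R Z} T F g.

Section Gen2.
Variable R : realType.
Variables (X Y : finType).

Fixpoint Qpow (Z : finType) (Q : Z -> Z -> R) T (f : Z -> R) (z : Z) : R :=
  match T with 0 => f z | S T' => \sum_(z' : Z) Q z z' * Qpow Q T' f z' end.

Lemma sum_sel2 T (G : X -> Y -> R) (H : {ffun 'I_T.+1 -> X} -> {ffun 'I_T.+1 -> Y} -> R) :
  \sum_(a : {ffun 'I_T.+1 -> X}) \sum_(b : {ffun 'I_T.+1 -> Y}) G (a ord0) (b ord0) * H a b =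
  \sum_(x : X) \sum_(y : Y) G x y * (\sum_(a : {ffun 'I_T.+1 -> X}) (if a ord0 == x then 1 else 0) *
       \sum_(b : {ffun 'I_T.+1 -> Y}) (if b ord0 == y then 1 else 0) * H a b).
Proof.
symmetry.
transitivity (\sum_(x : X) \sum_(a : {ffun 'I_T.+1 -> X}) \sum_(y : Y) \sum_(b : {ffun 'I_T.+1 -> Y})
   (if a ord0 == x then 1 else 0) * ((if b ord0 == y then 1 else 0) * (G x y * H a b))).
  apply: eq_bigr => x _; rewrite exchange_big; apply: eq_bigr => y _.
  rewrite mulr_sumr; apply: eq_bigr => a _; rewrite mulr_sumr mulr_sumr; apply: eq_bigr => b _.
  by rewrite mulrCA [_ * (G x y * _)]mulrCA.
rewrite exchange_big; apply: eq_bigr => a _.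
rewrite (bigD1 (a ord0)) //= [X in _ + X]big1 ?addr0; last first.
  by move=> x /negbTE Hx; apply: big1 => y _; apply: big1 => b _; rewrite eq_sym Hx mul0r.
rewrite eqxx.
rewrite exchange_big; apply: eq_bigr => b _.
rewrite (bigD1 (b ord0)) //= [X in _ + X]big1 ?addr0; last first.
  by move=> y /negbTE Hy; rewrite eq_sym Hy mul0r mulr0.
by rewrite eqxx !mul1r.
Qed.

Lemma expect (Q : X * Y -> X * Y -> R) (f : X * Y -> R) :
  forall T x0 y0,
  \sum_(a : {ffun 'I_T.+1 -> X}) (if a ord0 == x0 then 1 else 0) *
    \sum_(b : {ffun 'I_T.+1 -> Y}) (if b ord0 == y0 then 1 else 0) *
      (chainp T Q (fun t => (a t, b t)) * f (a ord_max, b ord_max))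
  = Qpow Q T f (x0, y0).
Proof.
elim=> [|T IH] x0 y0.
  rewrite sum_fcons_eq /= -[RHS](sum_ffun0 X); apply: eq_bigr => a _.
  rewrite sum_fcons_eq -[RHS](sum_ffun0 Y); apply: eq_bigr => b _.
  rewrite /chainp big_ord0 mul1r.
  by rewrite (_ : ord_max = ord0) ?fcons0 //; apply: val_inj.
rewrite sum_fcons_eq.
transitivity (\sum_(a : {ffun 'I_T.+1 -> X}) \sum_(b : {ffun 'I_T.+1 -> Y})
   Q (x0, y0) (a ord0, b ord0) * (chainp T Q (fun t => (a t, b t)) * f (a ord_max, b ord_max))).
  apply: eq_bigr => a _; rewrite sum_fcons_eq; apply: eq_bigr => b _.
  rewrite chainp_S /= !fcons0 !fconsS !fcons_max mulrA; congr (_ * _ * _).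
  by apply: chainp_ext => t; rewrite !fconsS.
rewrite (sum_sel2 (fun x y => Q (x0, y0) (x, y)) (fun a b => chainp T Q (fun t => (a t, b t)) * f (a ord_max, b ord_max))) /= pair_big /=; apply: eq_bigr => [[x y]] _ /=.
by rewrite IH.
Qed.

Lemma Qpow_bound (Z : finType) (Q : Z -> Z -> R) (S : pred Z) (h : Z -> R) (l : R) :
  (forall z z', 0 <= Q z z') -> 0 <= l ->
  (forall z z', S z -> ~~ S z' -> Q z z' = 0) ->
  (forall z, S z -> \sum_(z' : Z) Q z z' * h z' <= l * h z) ->
  forall T z, S z -> Qpow Q T h z <= l ^+ T * h z.
Proof.
move=> HQ Hl Hcl Hc; elim=> [|T IH] z Sz /=; first by rewrite expr0 mul1r.
apply: (@le_trans _ _ (\sum_z' Q z z' * (l ^+ T * h z'))).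
  apply: ler_sum => z' _; case Sz': (S z').
    by apply: ler_wpM2l => //; apply: IH.
  by rewrite Hcl ?Sz' // !mul0r.
under eq_bigr do rewrite mulrCA.
rewrite -mulr_sumr exprSr -mulrA; apply: ler_wpM2l; first exact: exprn_ge0.
exact: Hc.
Qed.

End Gen2.


Section Glau.
Variable R : realType.
Variables (m : nat) (k : 'I_m -> 'I_m -> R) (beta : R) (n : nat) (blk : 'I_n -> 'I_m).
Hypothesis n_gt0 : (0 < n)%N.

Definition upd (x : Omega n) (v : 'I_n) (s : bool) : Omega n :=
  [ffun u => if u == v then s else x u].

Definition pz (x : Omega n) v : R := beta * local_field k blk x v.
Definition pr (x : Omega n) v (s : bool) : R :=
  (1 + (if s then 1 else -1) * tanhR (pz x v)) / 2.

Lemma pr_exp x v s : pr x v s =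
  (if s then expR (pz x v) else expR (- pz x v)) / (expR (pz x v) + expR (- pz x v)).
Proof.
rewrite /pr /tanhR; set a := expR _; set b := expR _.
have ha : 0 < a by apply: expR_gt0.
have hb : 0 < b by apply: expR_gt0.
have hab : a + b != 0 by rewrite gt_eqF // addr_gt0.
by case: s; field.
Qed.

Lemma pr_ge0 x v s : 0 <= pr x v s.
Proof.
rewrite pr_exp; apply: divr_ge0; first by case: s; apply: ltW; apply: expR_gt0.
by apply: addr_ge0; apply: ltW; apply: expR_gt0.
Qed.

Lemma pr_sum x v : pr x v true + pr x v false = 1.
Proof. by rewrite /pr; field. Qed.

Lemma upd_eq (x x' : Omega n) v b :
  [forall w, (w != v) ==> (x' w == x w)] -> (x' == upd x v b) = (x' v == b).
Proof.
move/forallP => H; apply/eqP/eqP => [->|<-]; first by rewrite ffunE eqxx.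
apply/ffunP => u; rewrite ffunE; case: eqP => [->|/eqP neq] //.
by move/implyP: (H u) => /(_ neq) /eqP.
Qed.

Lemma upd_neq (x x' : Omega n) v b :
  ~~ [forall w, (w != v) ==> (x' w == x w)] -> (x' == upd x v b) = false.
Proof.
move=> H; apply/negbTE; apply: contra H => /eqP ->; apply/forallP => w; apply/implyP => /negbTE hw.
by rewrite ffunE hw.
Qed.

Lemma G1 (x x' : Omega n) : glauber_P k beta blk x x' =
  \sum_v \sum_(s : bool) (if x' == upd x v s then n%:R^-1 * pr x v s else 0).
Proof.
apply: eq_bigr => v _; rewrite big_bool /=.
case: (boolP [forall w, _]) => H.
  rewrite !upd_eq //; case: (x' v) => /=; by rewrite ?addr0 ?add0r /pr.
by rewrite !upd_neq // addr0.
Qed.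

Lemma sum_pick (T : finType) (e : T) (b : bool) (c : R) :
  \sum_(t : T) (if b && (t == e) then c else 0) = if b then c else 0.
Proof.
rewrite (bigD1 e) //= eqxx andbT big1 ?addr0 // => t /negbTE ->.
by rewrite andbF.
Qed.

Lemma sum_pick' (T : finType) (e : T) (b : bool) (c : R) :
  \sum_(t : T) (if (t == e) && b then c else 0) = if b then c else 0.
Proof. by under eq_bigr do rewrite andbC; apply: sum_pick. Qed.

Lemma P_ge0 x x' : 0 <= glauber_P k beta blk x x'.
Proof.
rewrite G1; apply: sumr_ge0 => v _; apply: sumr_ge0 => s _; case: ifP => // _.
by apply: mulr_ge0; [rewrite invr_ge0 ler0n | apply: pr_ge0].
Qed.

Lemma P_rowsum x : \sum_x' glauber_P k beta blk x x' = 1.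
Proof.
under eq_bigr do rewrite G1.
rewrite exchange_big /=.
transitivity (\sum_(v : 'I_n) n%:R^-1 : R).
  apply: eq_bigr => v _; rewrite exchange_big /=.
  transitivity (\sum_(s : bool) n%:R^-1 * pr x v s).
    by apply: eq_bigr => s _; rewrite -big_mkcond big_pred1_eq.
  by rewrite big_bool /= -mulrDr pr_sum mulr1.
rewrite sumr_const card_ord -[_ *+ n]mulr_natl mulfV //.
by rewrite pnatr_eq0 -lt0n.
Qed.

Definition mb (t : {perm 'I_n}) (x y : Omega n) : bool :=
  [forall u, (blk (t u) == blk u) && (y (t u) == x u) && ((x u == y u) ==> (t u == u))].

Lemma mbP t x y : mb t x y ->
  [/\ forall u, blk (t u) = blk u, forall u, y (t u) = x u & forall u, x u = y u -> t u = u].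
Proof.
move/forallP => H; split => u; move: (H u) => /andP [/andP [/eqP h1 /eqP h2] h3] //.
by move=> e; apply/eqP; move/implyP: h3; apply; apply/eqP.
Qed.

Definition Qm (t : {perm 'I_n}) (z z' : Omega n * Omega n) : R :=
  \sum_v \sum_(s : bool)
    (if (z'.1 == upd z.1 v s) && (z'.2 == upd z.2 (t v) s) then n%:R^-1 * pr z.1 v s else 0).

Definition Qc (z z' : Omega n * Omega n) : R :=
  if [pick t : {perm 'I_n} | mb t z.1 z.2] is Some t then Qm t z z'
  else glauber_P k beta blk z.1 z'.1 * glauber_P k beta blk z.2 z'.2.

Lemma lf_perm t x y v : mb t x y -> local_field k blk y (t v) = local_field k blk x v.
Proof.
case/mbP => hb hy _; rewrite /local_field (reindex_inj (@perm_inj _ t)) /=.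
apply: eq_big => [u|u _]; first by rewrite (inj_eq perm_inj).
by rewrite /Kint !hb /spin hy.
Qed.

Lemma pr_perm t x y v s : mb t x y -> pr y (t v) s = pr x v s.
Proof. by move=> h; rewrite /pr /pz (lf_perm v h). Qed.

Lemma Qc_ge0 z z' : 0 <= Qc z z'.
Proof.
rewrite /Qc; case: pickP => [t _|_]; last by apply: mulr_ge0; apply: P_ge0.
apply: sumr_ge0 => v _; apply: sumr_ge0 => s _; case: ifP => // _.
by apply: mulr_ge0; [rewrite invr_ge0 ler0n | apply: pr_ge0].
Qed.

Lemma Qc_marg1 x y x' : \sum_(y' : Omega n) Qc (x, y) (x', y') = glauber_P k beta blk x x'.
Proof.
rewrite /Qc /=; case: pickP => [t _|_]; last by rewrite -mulr_sumr P_rowsum mulr1.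
rewrite /Qm /= exchange_big G1 /=; apply: eq_bigr => v _.
rewrite exchange_big; apply: eq_bigr => s _ /=.
by rewrite sum_pick.
Qed.

Lemma Qc_marg2 x y y' : \sum_(x' : Omega n) Qc (x, y) (x', y') = glauber_P k beta blk y y'.
Proof.
rewrite /Qc /=; case: pickP => [t ht|_]; last by rewrite -mulr_suml P_rowsum mul1r.
rewrite /Qm /= exchange_big G1 /= [RHS](reindex_inj (@perm_inj _ t)) /=.
apply: eq_bigr => v _.
rewrite exchange_big; apply: eq_bigr => s _ /=.
by rewrite sum_pick' (pr_perm _ _ ht).
Qed.


Definition bsum (x : Omega n) (b : 'I_m) : R := \sum_(v | blk v == b) (spin x v : R).
Definition eqm (z : Omega n * Omega n) : bool := [forall b, bsum z.1 b == bsum z.2 b].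

Lemma eqm_of_perm (t : {perm 'I_n}) (x y : Omega n) :
  (forall j, blk (t j) = blk j) -> (forall j, y (t j) = x j) -> eqm (x, y).
Proof.
move=> hb hy; apply/forallP => b /=; apply/eqP.
rewrite /bsum [RHS](reindex_inj (@perm_inj _ t)) /=.
by apply: eq_big => [u|u _]; rewrite ?hb // /spin hy.
Qed.

Lemma mb_upd t x y v s : mb t x y ->
  forall j, upd y (t v) s (t j) = upd x v s j.
Proof.
case/mbP => _ hy _ j; rewrite !ffunE (inj_eq perm_inj).
by case: eqP => // _; rewrite hy.
Qed.

Lemma Qc_closed z z' : (exists t, mb t z.1 z.2) -> ~~ eqm z' -> Qc z z' = 0.
Proof.
case: z => x y [t0 ht0] /= hz'.
rewrite /Qc /=; case: pickP => [t ht|/(_ t0)]; last by rewrite ht0.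
apply: big1 => v _; apply: big1 => s _.
case: ifP => // /andP [/eqP e1 /eqP e2]; exfalso; move/negP: hz'; apply.
case: z' e1 e2 => x' y' /= -> ->.
apply: (@eqm_of_perm t) => j; first by case/mbP: ht.
exact: mb_upd.
Qed.

Definition dist (z : Omega n * Omega n) : R := \sum_u (if z.1 u != z.2 u then 1 else 0).

Lemma sum2 (F : 'I_n -> R) v w : v != w ->
  \sum_u F u = F v + F w + \sum_(u | (u != v) && (u != w)) F u.
Proof.
move=> hvw; rewrite (bigD1 v) //= (bigD1 w) /=; last by rewrite eq_sym.
rewrite addrA; congr (_ + _); apply: eq_bigl => u; by rewrite andbC.
Qed.

Lemma dist_upd t x y v s : mb t x y ->
  dist (upd x v s, upd y (t v) s) = dist (x, y) - 2 * (if (x v != y v) && (s != x v) then 1 else 0).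
Proof.
move=> ht; case/mbP: (ht) => hb hy hf.
rewrite /dist /=.
case: (boolP (x v == y v)) => [/eqP e|ne] /=.
  rewrite hf // mulr0 subr0 (bigD1 v) //= [in RHS](bigD1 v) //= !ffunE eqxx e eqxx.
  rewrite eqxx /=; congr (_ + _); apply: eq_bigr => u /negbTE hu; by rewrite !ffunE hu.
set w := t v.
have hwv : v != w.
  apply/eqP => e; move/eqP: ne; apply; by rewrite {2}e /w hy.
have hyw : y w = x v by rewrite /w hy.
have hxw : x w != y w.
  apply/negP => /eqP e; move/eqP: hwv; apply.
  by apply: (@perm_inj _ t); rewrite -/w (hf _ e).
rewrite (sum2 _ hwv) [in RHS](sum2 _ hwv) !ffunE !eqxx (negbTE hwv) [w == v]eq_sym (negbTE hwv) ne hxw.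
have -> : \sum_(u | (u != v) && (u != w)) (if upd x v s u != upd y w s u then 1 else 0) =
          \sum_(u | (u != v) && (u != w)) (if x u != y u then (1:R) else 0).
  apply: eq_bigr => u /andP [/negbTE h1 /negbTE h2]; by rewrite !ffunE h1 h2.
move: ne hxw hyw; case: (x v); case: (y v); case: (x w); case: (y w); case: s => //= *; subst; lra.
Qed.


Lemma Qc_contract z (d : R) : (forall x v s, d <= pr x v s) -> (exists t, mb t z.1 z.2) ->
  \sum_(z' : Omega n * Omega n) Qc z z' * dist z' <= (1 - 2 * d / n%:R) * dist z.
Proof.
case: z => x y hd [t0 ht0] /=.
rewrite /Qc /=; case: pickP => [t ht|/(_ t0)]; last by rewrite ht0.
have -> : \sum_(z' : Omega n * Omega n) Qm t (x, y) z' * dist z' =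
   \sum_v \sum_(s : bool) n%:R^-1 * pr x v s * dist (upd x v s, upd y (t v) s).
  rewrite /Qm.
  under eq_bigr do rewrite mulr_suml.
  rewrite exchange_big; apply: eq_bigr => v _ /=.
  under eq_bigr do rewrite mulr_suml.
  rewrite exchange_big; apply: eq_bigr => s _ /=.
  rewrite (bigD1 (upd x v s, upd y (t v) s)) //= !eqxx /= big1 ?addr0 // => [[x' y']] /=.
  rewrite xpair_eqE => /negbTE ->; by rewrite mul0r.
have Hv : forall v, \sum_(s : bool) n%:R^-1 * pr x v s * dist (upd x v s, upd y (t v) s)
     <= n%:R^-1 * (dist (x, y) - 2 * d * (if x v != y v then 1 else 0)).
  move=> v; under eq_bigr do rewrite -mulrA.
  rewrite -mulr_sumr; apply: ler_wpM2l; first by rewrite invr_ge0 ler0n.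
  rewrite big_bool /= !(dist_upd _ _ ht).
  move: (pr_sum x v) (hd x v true) (hd x v false).
  set pt := pr x v true; set pf := pr x v false; set D := dist (x, y).
  case: (x v); case: (y v) => /= hs h1 h2.
  - have -> : pt = 1 - pf by lra.
    nra.
  - have -> : pt = 1 - pf by lra.
    nra.
  - have -> : pt = 1 - pf by lra.
    nra.
  - have -> : pt = 1 - pf by lra.
    nra.
apply: le_trans (ler_sum _ (fun v _ => Hv v)) _.
rewrite -mulr_sumr sumrB sumr_const card_ord -mulr_sumr.
rewrite -/(dist (x, y)) /=.
have hn : (n%:R : R) != 0 by rewrite pnatr_eq0 -lt0n.
rewrite -mulr_natl le_eqVlt; apply/orP; left; apply/eqP; field; exact: hn.
Qed.

Lemma mb1 x : mb 1%g x x.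
Proof. by apply/forallP => u; rewrite !perm1 !eqxx. Qed.

Lemma find_partner x y u0 : eqm (x, y) -> x u0 -> ~~ y u0 ->
  exists w, [/\ blk w = blk u0, ~~ x w & y w].
Proof.
move=> /forallP /(_ (blk u0)) /eqP /= hs hx hy.
case: (pickP [pred w | (blk w == blk u0) && ~~ x w && y w]) => [w /andP [/andP [/eqP h1 h2] h3]|none].
  by exists w.
exfalso; move: hs; rewrite /bsum (bigD1 u0) //= [in X in _ = X](bigD1 u0) //= /spin hx (negbTE hy).
have : \sum_(i | (blk i == blk u0) && (i != u0)) (if y i then 1 else -1 : R) <=
       \sum_(i | (blk i == blk u0) && (i != u0)) (if x i then 1 else -1).
  apply: ler_sum => i /andP [hb _]; move: (none i) => /=; rewrite hb /=.
  by case: (x i); case: (y i).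
lra.
Qed.

Lemma eqm_sym x y : eqm (x, y) -> eqm (y, x).
Proof. by move/forallP => h; apply/forallP => b; rewrite eq_sym; apply: h. Qed.

Lemma eqm_trans x y z : eqm (x, y) -> eqm (y, z) -> eqm (x, z).
Proof.
move/forallP => h1 /forallP h2; apply/forallP => b /=.
by rewrite (eqP (h1 b)) (h2 b).
Qed.

Lemma exist_mb x y : eqm (x, y) -> exists t, mb t x y.
Proof.
move: x; suff: forall N (x : Omega n), (#|[set u | x u != y u]| <= N)%N -> eqm (x, y) -> exists t, mb t x y.
  by move=> H x; apply: (H _ x (leqnn _)).
elim=> [|N IH] x hN he.
  exists 1%g; suff -> : x = y by apply: mb1.
  apply/ffunP => u; apply/eqP; apply/negPn/negP => hu.
  by move: hN; rewrite leqn0 => /eqP /cards0_eq /setP /(_ u); rewrite !inE hu.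
case: (boolP [exists u, x u != y u]) => [/existsP [u0 hu0]|hnone]; last first.
  exists 1%g; suff -> : x = y by apply: mb1.
  apply/ffunP => u; apply/eqP; apply/negPn/negP => hu.
  by move/negP: hnone; apply; apply/existsP; exists u.
have [v [w [hvw [hxv hyv hxw hyw]]]] : exists v w, blk v = blk w /\ [/\ x v, ~~ y v, ~~ x w & y w].
  case hx0 : (x u0); move: hu0; rewrite hx0 => hy0.
    have hy0' : ~~ y u0 by case: (y u0) hy0.
    have [w [h1 h2 h3]] := find_partner he hx0 hy0'.
    by exists u0, w.
  have hy0' : y u0 by case: (y u0) hy0.
  have [v [h1 h2 h3]] := find_partner (eqm_sym he) hy0' (negbT hx0).
  by exists v, u0; split => //; rewrite hx0.
set x2 : Omega n := [ffun u => x (tperm v w u)].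
have hbt : forall j, blk (tperm v w j) = blk j.
  by move=> j; case: tpermP => // ->.
have he2 : eqm (x2, y).
  apply: eqm_trans he; apply: (@eqm_of_perm (tperm v w)) => // j.
  by rewrite /x2 ffunE.
have hv_ne_w : v != w by apply/eqP => e; move: hxw; rewrite -e hxv.
have hsub : [set u | x2 u != y u] \subset [set u | x u != y u] :\ v.
  apply/fintype.subsetP => u; rewrite !inE /x2 ffunE.
  case: tpermP => [->|->|h1 h2].
  - by rewrite (negbTE hyv) (negbTE hxw).
  - by rewrite hyw hxv.
  - by move=> ->; rewrite andbT; apply/eqP.
have hlt : (#|[set u | x2 u != y u]| <= N)%N.
  have := subset_leq_card hsub.
  move: hN; rewrite (cardsD1 v [set u | x u != y u]) !inE hxv (negbTE hyv) /= add1n ltnS.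
  by move=> h1 h2; apply: leq_trans h2 h1.
have [t2 ht2] := IH x2 hlt he2.
case/mbP: ht2 => hb2 hy2 hf2.
exists (tperm v w * t2)%g; apply/forallP => u; rewrite !permM.
rewrite hb2 hbt eqxx hy2 /x2 ffunE tpermK eqxx /=.
apply/implyP => /eqP e.
have hu_v : v != u by apply/eqP => ev; move: e; rewrite -ev hxv (negbTE hyv).
have hu_w : w != u by apply/eqP => ev; move: e; rewrite -ev (negbTE hxw) hyw.
rewrite tpermD // hf2 // /x2 ffunE tpermD //.
Qed.


Definition kmax : R := \sum_i \sum_j k i j.

Lemma k_le_kmax (Hk : forall i j, 0 < k i j) (i j : 'I_m) : k i j <= kmax.
Proof.
have h1 : k i j <= \sum_(l < m) k i l.
  rewrite [X in _ <= X](bigD1 j) //= lerDl; apply: sumr_ge0 => l _; exact: ltW.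
apply: le_trans h1 _; rewrite /kmax [X in _ <= X](bigD1 i) //= lerDl.
apply: sumr_ge0 => i' _; apply: sumr_ge0 => l _; exact: ltW.
Qed.

Lemma lf_bound (Hk : forall i j, 0 < k i j) x v : `|local_field k blk x v| <= kmax.
Proof.
apply: le_trans (ler_norm_sum _ _ _) _.
apply: (@le_trans _ _ (\sum_(w : 'I_n) kmax / n%:R)).
  rewrite [X in _ <= X](bigID (fun w => w != v)) /= -[X in X <= _]addr0.
  apply: lerD; last by apply: sumr_ge0 => w _; apply: divr_ge0; [apply: sumr_ge0 => i _; apply: sumr_ge0 => j _; apply: ltW | rewrite ler0n].
  apply: ler_sum => w _; rewrite normrM /spin.
  have -> : `|(if x w then 1 else -1 : R)| = 1 by case: (x w); rewrite ?normrN normr1.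
  rewrite mulr1 /Kint ger0_norm; last by apply: divr_ge0; [apply: ltW | rewrite ler0n].
  by apply: ler_wpM2r; [rewrite invr_ge0 ler0n | apply: k_le_kmax].
rewrite sumr_const card_ord -[_ *+ n]mulr_natr divfK //.
by rewrite pnatr_eq0 -lt0n.
Qed.

Lemma pr_lb (Hk : forall i j, 0 < k i j) (Hb : 0 <= beta) x v s :
  expR (- (beta * kmax)) / (2 * expR (beta * kmax)) <= pr x v s.
Proof.
set M := beta * kmax.
have hz : `|pz x v| <= M.
  by rewrite /pz normrM ger0_norm // ler_wpM2l // lf_bound.
have hz1 : - M <= pz x v /\ pz x v <= M by move: hz; rewrite ler_norml => /andP.
have ha1 : expR (- M) <= expR (pz x v) by rewrite ler_expR; case: hz1.
have ha2 : expR (pz x v) <= expR M by rewrite ler_expR; case: hz1.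
have hb1 : expR (- M) <= expR (- pz x v) by rewrite ler_expR lerN2; case: hz1.
have hb2 : expR (- pz x v) <= expR M by rewrite ler_expR lerNl; case: hz1.
have hM : 0 < expR M by apply: expR_gt0.
have hpos : 0 < expR (pz x v) + expR (- pz x v) by apply: addr_gt0; apply: expR_gt0.
rewrite pr_exp ler_pdivlMr //.
have hm : 0 <= expR (- M) / (2 * expR M).
  by apply: divr_ge0; [apply: ltW; apply: expR_gt0 | rewrite mulr_ge0 // ltW].
apply: (@le_trans _ _ (expR (- M) / (2 * expR M) * (2 * expR M))).
  apply: ler_wpM2l => //; rewrite mulr2n mulrDl mul1r; exact: lerD.
rewrite divfK; last by rewrite mulf_neq0 // gt_eqF.
by case: s.
Qed.

End Glau.

Unset Implicit Arguments. Set Strict Implicit.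

Section Main.
Variable R : realType.

Lemma final_bound (eta c : R) (n T : nat) (D : R) :
  0 < eta -> eta <= 1 -> c = 2 / eta -> (0 < n)%N ->
  T = horizon c n -> 0 <= D -> D <= n%:R ->
  (1 - eta / n%:R) ^+ T * D <= expR 1 / n%:R.
Proof.
move=> he he1 hc hn hT hD0 hDn.
have hn0 : (0 : R) < n%:R by rewrite ltr0n.
have hn1 : (1 : R) <= n%:R by rewrite ler1n.
have hl0 : 0 <= 1 - eta / n%:R.
  rewrite subr_ge0 ler_pdivrMr // mul1r; exact: le_trans hn1.
have h1 : (1 - eta / n%:R) ^+ T <= expR (T%:R * (- (eta / n%:R))).
  rewrite expRM_natl; apply: lerXn2r; rewrite ?nnegrE //.
  exact: expR_ge1Dx.
set L := ln (n%:R : R).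
have hL : 0 <= L by apply: ln_ge0.
have hTg : c * n%:R * L - 1 < T%:R.
  rewrite hT /horizon ltrBlDr natr1; exact: truncnS_gt.
have h2 : T%:R * (- (eta / n%:R)) <= 1 - 2 * L.
  have hen : 0 <= eta / n%:R by apply: divr_ge0 => //; apply: ltW.
  have e1 : (c * n%:R * L - 1) * (- (eta / n%:R)) = - 2 * L + eta / n%:R.
    rewrite hc; field; apply/andP; split; apply: lt0r_neq0 => //.
  have h3 : T%:R * (- (eta / n%:R)) <= (c * n%:R * L - 1) * (- (eta / n%:R)).
    rewrite !mulrN lerN2; apply: ler_wpM2r => //; exact: ltW.
  apply: le_trans h3 _; rewrite e1.
  have : eta / n%:R <= 1 by rewrite ler_pdivrMr // mul1r; exact: le_trans hn1.
  lra.
have h4 : expR (1 - 2 * L) * n%:R = expR 1 / n%:R.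
  have hnL : expR L = n%:R by rewrite /L lnK // posrE.
  have e2 : 1 - 2 * L = 1 + (- L + - L) by ring.
  rewrite e2 !expRD !expRN hnL; field.
  by apply: lt0r_neq0.
apply: (@le_trans _ _ (expR (1 - 2 * L) * n%:R)); last by rewrite h4.
apply: (@le_trans _ _ (expR (T%:R * - (eta / n%:R)) * D)).
  by apply: ler_wpM2r.
apply: ler_pM; [exact: ltW (expR_gt0 _) | exact: hD0 | by rewrite ler_expR | exact: hDn].
Qed.

End Main.

Lemma dist_ge1 (R : realType) n (x y : Omega n) : x != y -> 1 <= dist R (x, y).
Proof.
move=> hxy.
have [u hu] : exists u, x u != y u.
  apply/existsP; apply: contraR hxy => /existsPn h; apply/eqP/ffunP => u.
  by apply/eqP; move: (h u); rewrite negbK.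
rewrite /dist (bigD1 u) //= hu lerDl; apply: sumr_ge0 => w _; by case: ifP.
Qed.

Lemma dist_bounds (R : realType) n (z : Omega n * Omega n) : 0 <= dist R z /\ dist R z <= n%:R.
Proof.
split; first by apply: sumr_ge0 => w _; case: ifP.
apply: (@le_trans _ _ (\sum_(w : 'I_n) (1 : R))).
  by apply: ler_sum => w _; case: ifP.
by rewrite sumr_const card_ord.
Qed.

Theorem lemma4p13 (R : realType) (m : nat) (p : 'I_m -> R) (k : 'I_m -> 'I_m -> R)
    (beta : R)
    (Hm : (0 < m)%N)
    (Hp : forall i, 0 < p i) (Hpsum : \sum_(i < m) p i = 1)
    (Hk : forall i j, 0 < k i j) (Hksym : forall i j, k i j = k j i)
    (Hbeta : 0 <= beta) :
  exists c : R, 0 < c /\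
  forall (blk : forall n : nat, 'I_n -> 'I_m),
    (forall n, admissible p n -> block_sizes_ok p (blk n)) ->
  forall (sig sig' : forall n : nat, Omega n),
    (forall n, admissible p n ->
       forall i, @magnetization R _ _ (blk n) (sig n) i = @magnetization R _ _ (blk n) (sig' n) i) ->
  exists mu : forall n : nat, traj n (horizon c n) * traj n (horizon c n) -> R,
    (forall n, admissible p n -> is_coupling k beta (blk n) (sig n) (sig' n) (mu n)) /\
    (forall eps : R, 0 < eps -> exists N : nat, forall n, admissible p n -> (N <= n)%N ->
       prob_not_met (mu n) <= eps).
Proof.
set M := beta * kmax k.
have hM : 0 <= M.
  apply: mulr_ge0 => //; apply: sumr_ge0 => i _; apply: sumr_ge0 => j _; exact: ltW.
set del := expR (- M) / (2 * expR M).
set eta := 2 * del.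
have hEM : 0 < expR M by apply: expR_gt0.
have hEm : 0 < expR (- M) by apply: expR_gt0.
have eeta : eta = expR (- M) / expR M by rewrite /eta /del; field; apply: lt0r_neq0.
have he : 0 < eta by rewrite eeta divr_gt0.
have he1 : eta <= 1.
  rewrite eeta ler_pdivrMr // mul1r; apply: (@le_trans _ _ 1).
    by rewrite -expR0 ler_expR lerNl oppr0.
  by rewrite -expR0 ler_expR.
exists (2 / eta); split; first by apply: divr_gt0.
move=> blk Hblk sig sig' Hmag.
set c := 2 / eta.
pose mu := fun n (ab : traj n (horizon c n) * traj n (horizon c n)) =>
  (if ab.1 ord0 == sig n then 1 else 0) * ((if ab.2 ord0 == sig' n then 1 else 0) *
    chainp (horizon c n) (Qc k beta (blk n)) (fun t => (ab.1 t, ab.2 t))).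
exists mu; split.
  move=> n [hn _]; split.
  - move=> [a b]; rewrite /mu /=; apply: mulr_ge0; first by case: ifP.
    apply: mulr_ge0; first by case: ifP.
    by apply: prodr_ge0 => t _; apply: Qc_ge0.
  - move=> a; rewrite /mu /= -mulr_sumr (marg1 (@Qc_marg1 R m k beta n (blk n) hn)).
    by [].
  - move=> b; rewrite /mu /=.
    under eq_bigr do rewrite mulrCA.
    rewrite -mulr_sumr.
    have HQ : forall (x y x' : Omega n),
        \sum_(y' : Omega n) (fun z z' : Omega n * Omega n => Qc k beta (blk n) (z.2, z.1) (z'.2, z'.1)) (x, y) (x', y')
        = glauber_P k beta (blk n) x x'.
      by move=> x y x' /=; apply: (@Qc_marg2 R m k beta n (blk n) hn).
    transitivity ((if b ord0 == sig' n then 1 else 0) * chainp (horizon c n) (glauber_P k beta (blk n)) b); last by [].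
    congr (_ * _); apply: etrans; last exact: (@marg1 R _ _ (fun z z' : Omega n * Omega n => Qc k beta (blk n) (z.2, z.1) (z'.2, z'.1)) _ HQ _ b (sig n)).
    by apply: eq_bigr => a _.
move=> eps heps.
exists (Num.truncn (expR 1 / eps)).+1 => n hadm hN.
case: (hadm) => hn _.
have hn0 : (0 : R) < n%:R by rewrite ltr0n.
set T := horizon c n.
set z0 := (sig n, sig' n).
have hz0 : eqm R (blk n) z0.
  apply/forallP => b; apply/eqP; have := Hmag n hadm b.
  rewrite /magnetization /bsum => /(congr1 (fun r => r * n%:R)).
  by rewrite !divfK // lt0r_neq0.
have hd : forall x v s, del <= pr k beta (blk n) x v s.
  by move=> x v s; apply: (pr_lb (blk n) hn Hk Hbeta).
have step1 : prob_not_met (mu n) <=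
   \sum_(ab : traj n T * traj n T) mu n ab * dist R (ab.1 ord_max, ab.2 ord_max).
  rewrite /prob_not_met [X in _ <= X](bigID (fun ab : traj n T * traj n T => [forall t, ab.1 t != ab.2 t])) /=.
  rewrite -[X in X <= _]addr0; apply: lerD.
    apply: ler_sum => ab /forallP /(_ ord_max) hne.
    have hmu : 0 <= mu n ab.
      rewrite /mu; apply: mulr_ge0; first by case: ifP.
      apply: mulr_ge0; first by case: ifP.
      by apply: prodr_ge0 => t _; apply: Qc_ge0.
    by apply: ler_peMr => //; apply: dist_ge1.
  apply: sumr_ge0 => ab _; apply: mulr_ge0; last by case: (dist_bounds R _ (ab.1 ord_max, ab.2 ord_max)).
  rewrite /mu; apply: mulr_ge0; first by case: ifP.
  apply: mulr_ge0; first by case: ifP.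
  by apply: prodr_ge0 => t _; apply: Qc_ge0.
have step2 : \sum_(ab : traj n T * traj n T) mu n ab * dist R (ab.1 ord_max, ab.2 ord_max)
   = Qpow (Qc k beta (blk n)) T (@dist R n) z0.
  rewrite -(expect (Qc k beta (blk n)) (@dist R n) T (sig n) (sig' n)).
  rewrite -(pair_big xpredT xpredT (fun a b => mu n (a, b) * dist R (a ord_max, b ord_max))) /=.
  apply: eq_bigr => a _; rewrite mulr_sumr; apply: eq_bigr => b _.
  by rewrite /mu /= !mulrA.
have step3 : Qpow (Qc k beta (blk n)) T (@dist R n) z0 <= (1 - eta / n%:R) ^+ T * dist R z0.
  apply: (@Qpow_bound R _ _ (eqm R (blk n))) => //.
  - by move=> z z'; apply: Qc_ge0.
  - rewrite subr_ge0 ler_pdivrMr // mul1r; apply: le_trans he1 _; by rewrite ler1n.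
  - move=> [x y] z' hz hz'; apply: Qc_closed hz'; exact: exist_mb hz.
  - move=> [x y] hz; apply: (Qc_contract hn hd); exact: exist_mb hz.
have step4 : (1 - eta / n%:R) ^+ T * dist R z0 <= expR 1 / n%:R.
  case: (dist_bounds R _ z0) => h1 h2.
  exact: (@final_bound R eta c n T _ he he1 (erefl c) hn (erefl T) h1 h2).
have step5 : expR 1 / n%:R <= eps.
  rewrite ler_pdivrMr // mulrC -ler_pdivrMr //.
  apply: ltW; apply: lt_le_trans (truncnS_gt _) _.
  by rewrite ler_nat.
apply: le_trans step1 _; rewrite step2.
apply: le_trans step3 _; apply: le_trans step4 _; exact: step5.
Qed.
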